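(* Let $s\ge 1$, $i$ and $j'$ be integers with $s\le i\le 2s$ and $i-s\le j'\le s$. Then $$\sum_{t=0}^{2s-i}\frac{(-1)^t}{2s-t}\binom{2s-i}{t}\binom{2s-t-1-j'}{s-j'}=\frac{(-1)^{s+i+j'}}{i}\binom{s}{j'}\binom{2s}{i}^{-1}.$$
   Context: For an integer $b\ge 0$ and any integer $a$, $\binom{a}{b}=a(a-1)\cdots(a-b+1)/b!$ (so $\binom{a}{0}=1$). *)

(* Defs.v *)
From mathcomp Require Import all_boot all_order all_algebra.
Set Implicit Arguments. Unset Strict Implicit. Unset Printing Implicit Defensive.
Import Order.TTheory GRing.Theory Num.Theory.
Local Open Scope ring_scope.

Definition gbinom (a : int) (b : nat) : rat :=
  (\prod_(k < b) (a - k%:Z)%:~R) / (b`!)%:R.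

(* Main.v *)
Require Import Defs.
From mathcomp Require Import all_boot all_order all_algebra.
Import Order.TTheory GRing.Theory Num.Theory.
Local Open Scope ring_scope.
From mathcomp Require Import ring lra zify.
Lemma pascal_sum n (f : nat -> rat) :
 \sum_(t < n.+2) (-1)^+t * ('C(n.+1,t))%:R * f t =
 \sum_(t < n.+1) (-1)^+t * ('C(n,t))%:R * (f t - f t.+1).
Proof.
rewrite big_ord_recl /= bin0.
under eq_bigr => i _ do rewrite /bump /= add1n binS natrD mulrDr mulrDl.
rewrite big_split /=.
under [in RHS]eq_bigr => i _ do rewrite mulrBr.
rewrite sumrB.
rewrite [in RHS]big_ord_recl /= bin0.
under [in RHS]eq_bigr => i _ do rewrite /bump /= add1n.
rewrite [X in _ + (X + _) = _]big_ord_recr /= bin_small // mulr0 mul0r addr0.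
rewrite -addrA -sumrN; congr (_ + (_ + _)); apply: eq_bigr => i _; rewrite exprS; ring.

Qed.

Lemma powsum0 n k : (k < n)%N ->
  \sum_(t < n.+1) (-1)^+t * ('C(n,t))%:R * (t%:R : rat) ^+ k = 0.
Proof.
elim: n k => [//|n IH] k Hk.
rewrite (pascal_sum n (fun t => (t%:R : rat) ^+ k)).
have E : forall t : nat, (t%:R : rat) ^+ k - (t.+1)%:R ^+ k =
   - \sum_(j < k) (t%:R) ^+ j *+ 'C(k, j).
  move=> t; rewrite -addn1 natrD exprD1n big_ord_recr /= binn mulr1n.
  by rewrite opprD addrC -addrA addNr addr0.
under eq_bigr => t _ do rewrite E mulrN mulr_sumr.
rewrite sumrN exchange_big /= big1 ?oppr0 // => j _.
under eq_bigr => t _ do rewrite -[_ *+ 'C(k, j)]mulr_natr mulrA.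
rewrite -mulr_suml IH ?mul0r //.
by apply: leq_trans (ltn_ord j) _.
Qed.

Lemma polysum0 n (p : {poly rat}) : (size p <= n)%N ->
  \sum_(t < n.+1) (-1)^+t * ('C(n,t))%:R * p.[t%:R] = 0.
Proof.
move=> Hp.
under eq_bigr => t _ do rewrite horner_coef mulr_sumr.
rewrite exchange_big /= big1 // => j _.
under eq_bigr => t _ do rewrite mulrCA.
rewrite -mulr_sumr powsum0 ?mulr0 //.
exact: leq_trans (ltn_ord j) Hp.
Qed.

Lemma T1 n k :
  \sum_(t < n.+1) (-1)^+t * ('C(n,t))%:R / ((n + k).+1%:R - t%:R : rat) =
  (-1)^+n * (n`!)%:R * (k`!)%:R / ((n + k).+1`!)%:R.
Proof.
elim: n k => [|n IH] k.
  rewrite big_ord1 /= add0n factS natrM subr0 bin0 !mulr1 expr0 mul1r.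
  rewrite mul1r invfM mulrCA divff ?mulr1 // pnatr_eq0 -lt0n fact_gt0 //.
rewrite (pascal_sum n (fun t => ((n.+1 + k).+1%:R - t%:R : rat)^-1)).
have E : forall t : 'I_n.+1, ((n.+1 + k).+1%:R - t%:R : rat)^-1 - ((n.+1 + k).+1%:R - t.+1%:R)^-1
   = ((n + k.+1).+1%:R - t%:R)^-1 - ((n + k).+1%:R - t%:R)^-1.
  move=> t; congr (_^-1 - _^-1).
    by rewrite addnS addSn.
  rewrite addSn -!natr1; ring.
under eq_bigr => t _ do rewrite E mulrBr.
rewrite sumrB -!/(_ / _) IH IH.
rewrite !addnS !addSn !factS !natrM exprS.
have h1 : ((n+k).+1`!)%:R != (0 : rat) by rewrite pnatr_eq0 -lt0n fact_gt0.
have h2 : (n+k).+2%:R != (0 : rat) by rewrite pnatr_eq0.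
rewrite -!natr1.
field.
by rewrite pnatr_eq0 -lt0n fact_gt0 /= -natrD !natr1 !pnatr_eq0.
Qed.

Lemma polyT n k (p : {poly rat}) : (size p <= n.+1)%N ->
  \sum_(t < n.+1) (-1)^+t * ('C(n,t))%:R * p.[t%:R] / ((n + k).+1%:R - t%:R) =
  p.[(n + k).+1%:R] * ((-1)^+n * (n`!)%:R * (k`!)%:R / ((n + k).+1`!)%:R).
Proof.
move=> Hp; set c : rat := (n + k).+1%:R.
have Hr : root (p - p.[c]%:P) c by rewrite rootE hornerD hornerN hornerC subrr.
have [q Hq] := factor_theorem _ _ Hr.
have Hsq : (size q <= n)%N.
  have [->|qn0] := eqVneq q 0; first by rewrite size_poly0.
  have := size_polyD p (- p.[c]%:P).
  rewrite Hq size_Mmonic ?monicXsubC // size_XsubC size_polyN size_polyC addn2 /=.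
  move=> H; rewrite -ltnS; apply: leq_trans H _; rewrite geq_max Hp /=; exact: leq_trans (leq_b1 _) _.
have Ep : forall x, p.[x] = p.[c] + q.[x] * (x - c).
  move=> x; have := congr1 (fun r => r.[x]) Hq.
  rewrite /= hornerD hornerN hornerC hornerM hornerD hornerN hornerX hornerC.
  by move=> <-; rewrite addrC subrK.
have Et : forall t : 'I_n.+1, (-1)^+t * ('C(n,t))%:R * p.[t%:R] / (c - t%:R) =
   p.[c] * ((-1)^+t * ('C(n,t))%:R / (c - t%:R)) - (-1)^+t * ('C(n,t))%:R * q.[t%:R].
  move=> t; rewrite Ep.
  have : c - t%:R != 0.
    rewrite /c subr_eq0 eqr_nat; have := ltn_ord t; lia.
  move=> H; field; by rewrite (addrC 1) -natrD natr1.
under eq_bigr => t _ do rewrite Et.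
rewrite sumrB polysum0 // subr0 -mulr_sumr T1 //.
Qed.
Definition Pb (b : nat) : {poly rat} :=
  (\prod_(k < b) ('X - (k%:R)%:P)) * ((b`!)%:R^-1)%:P.

Lemma gbinom_poly (z : int) b : gbinom z b = (Pb b).[z%:~R].
Proof.
rewrite /gbinom /Pb hornerM hornerC horner_prod.
congr (_ * _); apply: eq_bigr => k _.
by rewrite hornerD hornerN hornerX hornerC rmorphB /= -pmulrn.
Qed.

Lemma size_Pb b : (size (Pb b) <= b.+1)%N.
Proof.
have H : (size (\prod_(k < b) ('X - (k%:R : rat)%:P))%R <= b.+1)%N.
  elim: b => [|b IH]; first by rewrite big_ord0 size_poly1.
  rewrite big_ord_recr /=.
  have [->|nz] := eqVneq (\prod_(i < b) ('X - ((i:nat)%:R : rat)%:P))%R 0.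
    by rewrite mul0r size_poly0.
  by rewrite size_Mmonic ?monicXsubC // size_XsubC addn2.
rewrite /Pb; apply: leq_trans (size_mul_leq _ _) _.
rewrite size_polyC; case: (_ != 0) => /=; rewrite ?addn1 ?addn0 //=.
by apply: leq_trans (leq_pred _) _.
Qed.

Lemma prod_ffact (a b : nat) : \prod_(k < b) ((a%:R : rat) - k%:R) = (a ^_ b)%:R.
Proof.
elim: b => [|b IH]; first by rewrite big_ord0 ffactn0.
rewrite big_ord_recr /= IH ffactnSr natrM.
have [le|lt] := leqP b a; first by rewrite (natrB _ le).
by rewrite ffact_small // mulr0n !mul0r.
Qed.

Lemma gbinom_nat (a b : nat) : gbinom a%:Z b = ('C(a, b))%:R.
Proof.
rewrite /gbinom.
under eq_bigr => k _ do rewrite rmorphB /= -!pmulrn.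
rewrite prod_ffact -bin_ffact natrM mulfK // pnatr_eq0 -lt0n fact_gt0 //.
Qed.

Lemma prod_refl (y : rat) m :
  \prod_(k < m) ((m%:R - 1) - y - k%:R) = \prod_(k < m) (k%:R - y).
Proof.
elim: m y => [|m IH] y; first by rewrite !big_ord0.
rewrite big_ord_recl big_ord_recr /= -IH.
rewrite mulrC; congr (_ * _).
  apply: eq_bigr => k _; rewrite /bump /= add1n -!natr1; ring.
rewrite -natr1; ring.
Qed.

Lemma Pb_neg (S m : nat) : (m <= S)%N ->
  (Pb m).[m%:R - 1 - S%:R] = (-1)^+m * ('C(S, m))%:R.
Proof.
move=> le.
rewrite /Pb hornerM hornerC horner_prod.
under eq_bigr => k _ do rewrite hornerD hornerN hornerX hornerC.
rewrite prod_refl.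
under eq_bigr => k _ do rewrite -opprB.
rewrite prodrN card_ord prod_ffact -bin_ffact natrM -mulrA mulfK //.
by rewrite pnatr_eq0 -lt0n fact_gt0.
Qed.

Theorem lemma7 (s i j : int) :
  1 <= s -> s <= i -> i <= 2 * s -> i - s <= j -> j <= s ->
  \sum_(t < (`|(2 * s - i)%R|%N).+1)
     ((-1 : rat) ^+ t / (2 * s - t%:Z)%:~R
        * gbinom (2 * s - i) t * gbinom (2 * s - t%:Z - 1 - j) `|(s - j)%R|%N)
  = (-1 : rat) ^ (s + i + j) / i%:~R * gbinom s `|j|%N / gbinom (2 * s) `|i|%N.
Proof.
move=> h1 h2 h3 h4 h5.
have [S ES] : exists S : nat, s = S%:Z by exists `|s|%N; lia.
have [n En] : exists n : nat, i = 2 * S%:Z - n%:Z by exists `|(2 * s - i)%R|%N; lia.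
have [m Em] : exists m : nat, j = S%:Z - m%:Z by exists `|(s - j)%R|%N; lia.
subst s i j.
have HS : (1 <= S)%N by lia.
have Hn : (n <= S)%N by lia.
have Hm : (m <= n)%N by lia.
set k := (2 * S - n).-1.
set N := (n + k).+1.
have HN : 2 * S%:Z = N%:Z by rewrite /N /k; lia.
rewrite HN.
rewrite (_ : N%:Z - (N%:Z - n%:Z) = n%:Z); last by ring.
rewrite (_ : S%:Z - (S%:Z - m%:Z) = m%:Z); last by ring.
rewrite !absz_nat.
pose p := Pb m \Po (((m + S)%:R - 1)%:P - 'X).
have Hp : (size p <= n.+1)%N.
  apply: leq_trans (size_comp_poly_leq _ _) _.
  rewrite (_ : size (((m + S)%:R - 1 : rat)%:P - 'X) = 2%N); last first.
    by rewrite -opprB size_polyN size_XsubC.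
  rewrite muln1 ltnS -subn1 leq_subLR add1n; apply: leq_trans (size_Pb m) _; by rewrite ltnS.
rewrite (eq_bigr (fun t : 'I_n.+1 => (-1)^+t * ('C(n,t))%:R * p.[t%:R] / ((n + k).+1%:R - t%:R))); last first.
  move=> t _.
  rewrite gbinom_nat gbinom_poly /p horner_comp !hornerE.
  rewrite (_ : N%:Z - t%:Z - 1 - (S%:Z - m%:Z) = (m + S)%N%:Z - 1 - t%:Z); last by lia.
  rewrite !rmorphB /= -!pmulrn.
  rewrite /N; ring.
rewrite polyT //.
rewrite /p horner_comp hornerD hornerN hornerC hornerX.
have HN' : (n + k).+1 = (2 * S)%N by rewrite /k; lia.
rewrite HN' (_ : ((m + S)%:R - 1 - (2 * S)%:R : rat) = m%:R - 1 - S%:R); last first.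
  rewrite natrD natrM; ring.
rewrite (@Pb_neg S m (leq_trans Hm Hn)).
rewrite (_ : S%:Z + (N%:Z - n%:Z) + (S%:Z - m%:Z) = ((n + m) + 2 * (2 * S - n - m))%N%:Z); last by rewrite /N HN'; lia.
have Ex : forall e : nat, (-1 : rat) ^ (e%:Z) = (-1)^+e by [].
rewrite Ex exprD exprM sqrrN expr1n mulr1 exprD -HN'.
rewrite (_ : N%:Z - n%:Z = (k.+1)%N%:Z); last by rewrite /N; lia.
rewrite (_ : S%:Z - m%:Z = (S - m)%N%:Z); last by lia.
rewrite !absz_nat -pmulrn !gbinom_nat (bin_sub (leq_trans Hm Hn)).
have HF : ('C(N, k.+1) * ((k.+1)`! * n`!))%N = N`!.
  have H1 : (k.+1 <= N)%N by rewrite /N; lia.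
  have H2 : (N - k.+1)%N = n by rewrite /N; lia.
  by have := bin_fact H1; rewrite H2.
rewrite -HF factS !natrM.
have c0 : ('C(N, k.+1))%:R != (0 : rat) by rewrite pnatr_eq0 -lt0n bin_gt0; lia.
have f0 : (forall a, (a`!)%:R != (0 : rat)) by move=> a; rewrite pnatr_eq0 -lt0n fact_gt0.
have f1 : ((k.+1)%:R != (0 : rat)) by rewrite pnatr_eq0.
have cS : ('C(S, m))%:R != (0 : rat) by rewrite pnatr_eq0 -lt0n bin_gt0 (leq_trans Hm Hn).
field; by rewrite c0 nat1r f1 !f0.
Qed.
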